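(* Let $a>1$, $k\geq0$, $n\geq1$, $C_j(n,a)=\binom{n}{j}\left(\frac{1+a}{2}\right)^{n-j}\left(\frac{1-a}{2}\right)^j$, and $\mathtt{H}_{k,n}(x)=h_k(x)\sum_{j=0}^nC_j(n,a)e^{i(1-\frac{2j}{n})x}$. With $e_k(z)=z^k/\sqrt{k!}$ and $b_j=-\frac{i}{\sqrt2}(1-\frac{2j}{n})$, $$\mathcal{B}(\mathtt{H}_{k,n})(z)=\sum_{j=0}^nC_j(n,a)k_{b_j}(z)e_k(z-b_j)=\sum_{j=0}^nC_j(n,a)\mathcal{W}_{b_j}[e_k](z),\quad z\in\mathbb{C}.$$
   Context: $h_k$ are the normalized Hermite functions, $h_k(x)=(2^kk!\sqrt\pi)^{-1/2}H_k(x)e^{-x^2/2}$ with $H_k$ the Hermite polynomials. $\mathcal{B}(\varphi)(z)=\pi^{-1/4}\int_{\mathbb{R}}e^{-\frac12(z^2+x^2)+\sqrt2 zx}\varphi(x)\,dx$ is the Segal-Bargmann transform. $k_w(z)=e^{z\overline w-|w|^2/2}$ is the normalized Fock kernel, and for $b\in\mathbb{C}$ the Weyl operator on the Fock space is $\mathcal{W}_bf(z)=f(z-b)k_b(z)$. *)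

(* Defs.v *)
From Stdlib Require Import Reals.
From Coquelicot Require Import Coquelicot.
Open Scope R_scope.

(* Physicists' Hermite polynomials: H_0 = 1, H_1 = 2x,
   H_{k+2} = 2x H_{k+1} - 2(k+1) H_k.  hermite2 k x = (H_k x, H_{k+1} x). *)
Fixpoint hermite2 (k : nat) (x : R) : R * R :=
  match k with
  | O => (1, 2 * x)
  | S k' => let (p, q) := hermite2 k' x in (q, 2 * x * q - 2 * INR (S k') * p)
  end.
Definition hermite (k : nat) (x : R) : R := fst (hermite2 k x).

Definition hermite_fn (k : nat) (x : R) : R :=
  / sqrt (2 ^ k * INR (Factorial.fact k) * sqrt PI) * hermite k x * exp (- (x ^ 2) / 2).

Definition cexp (z : C) : C :=
  (exp (Re z) * cos (Im z), exp (Re z) * sin (Im z)).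

Fixpoint cpow (z : C) (k : nat) : C :=
  match k with O => RtoC 1 | S k' => Cmult z (cpow z k') end.

Definition Ccoef (n : nat) (a : R) (j : nat) : R :=
  Binomial.C n j * ((1 + a) / 2) ^ (n - j) * ((1 - a) / 2) ^ j.

Definition freq (n j : nat) : R := 1 - 2 * INR j / INR n.

Definition Htest (k n : nat) (a : R) (x : R) : C :=
  Cmult (RtoC (hermite_fn k x))
    (sum_n (fun j => Cmult (RtoC (Ccoef n a j)) (cexp (Cmult Ci (RtoC (freq n j * x))))) n).

Definition bargmann_integrand (phi : R -> C) (z : C) (x : R) : C :=
  Cmult (RtoC (Rpower PI (- (1/4))))
    (Cmult (cexp (Cplus (Cmult (RtoC (-1/2)) (Cplus (Cmult z z) (RtoC (x ^ 2))))
                        (Cmult (RtoC (sqrt 2 * x)) z)))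
           (phi x)).

Definition is_bargmann (phi : R -> C) (z v : C) : Prop :=
  is_RInt_gen (bargmann_integrand phi z) (Rbar_locally m_infty) (Rbar_locally p_infty) v.

Definition fock_kernel (w z : C) : C :=
  cexp (Cminus (Cmult z (Cconj w)) (RtoC (Cmod w ^ 2 / 2))).

Definition ek (k : nat) (z : C) : C :=
  Cmult (cpow z k) (RtoC (/ sqrt (INR (Factorial.fact k)))).

Definition weyl (b : C) (f : C -> C) (z : C) : C :=
  Cmult (f (Cminus z b)) (fock_kernel b z).

Definition bj (n j : nat) : C :=
  Cmult (Copp (Cmult Ci (RtoC (/ sqrt 2)))) (RtoC (freq n j)).

(* Main.v *)
Require Import Defs.
From Stdlib Require Import Reals Lra Lia Psatz.
From Coquelicot Require Import Coquelicot.
Open Scope R_scope.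

Lemma decay_gauss (A K C : R) : forall eps, 0 < eps -> exists M, 0 <= M /\
  forall x, M <= Rabs x -> A * exp (K * Rabs x - x^2/2 + C) < eps.
Proof.
  intros eps Heps.
  set (Q := 4 * (Rabs A / eps + K^2 + Rabs C)).
  assert (HQ : 0 <= Q).
  { unfold Q. assert (0 <= Rabs A / eps) by (apply Rdiv_le_0_compat; [apply Rabs_pos|lra]).
    pose proof (Rabs_pos C). nra. }
  exists (Q + 1). split; [lra|].
  intros x Hx.
  destruct (Rle_or_lt A 0) as [HA|HA].
  { pose proof (exp_pos (K * Rabs x - x ^ 2 / 2 + C)). nra. }
  set (T := x^2/2 - K * Rabs x - C).
  replace (K * Rabs x - x ^ 2 / 2 + C) with (- T) by (unfold T; ring).
  rewrite exp_Ropp.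
  pose proof (exp_ineq1_le T) as HT.
  pose proof (exp_pos T) as HTp.
  assert (Hx2 : x^2 = Rabs x * Rabs x).
  { rewrite <- Rabs_mult. simpl. rewrite Rmult_1_r. rewrite Rabs_right; [ring|].
    apply Rle_ge, Rle_0_sqr. }
  assert (HT2 : T > Rabs A / eps).
  { unfold T. pose proof (Rabs_pos x). pose proof (Rle_abs C).
    assert (HxQ : x^2 > Q).
    { rewrite Hx2. assert (Rabs x * Rabs x >= (Q+1)*(Q+1)) by (apply Rle_ge, Rmult_le_compat; lra). nra. }
    unfold Q in HxQ. assert (0 <= (Rabs x / 2 - K)^2) by apply pow2_ge_0. assert (K * Rabs x <= x^2/4 + K^2) by (rewrite Hx2; nra). nra. }
  rewrite Rabs_right in HT2 by lra.
  apply (Rmult_lt_reg_r (exp T)); [lra|].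
  rewrite Rmult_assoc, Rinv_l by lra. rewrite Rmult_1_r.
  assert (A / eps * eps = A) by (field; lra).
  assert (A < eps * T).
  { apply (Rmult_lt_compat_r eps) in HT2; [|lra]. nra. }
  nra.
Qed.

Lemma contR (f : R -> R) x : ex_derive f x -> continuous f x.
Proof. exact (ex_derive_continuous (K:=R_AbsRing) (V:=R_NormedModule) f x). Qed.

Lemma exRI (f : R -> R) a b : (forall z, Rmin a b <= z <= Rmax a b -> continuous f z) -> ex_RInt f a b.
Proof. exact (@ex_RInt_continuous R_CompleteNormedModule f a b). Qed.

Lemma exRI_d (f : R -> R) a b : (forall z, ex_derive f z) -> ex_RInt f a b.
Proof. intros H. apply exRI. intros. apply contR, H. Qed.

Lemma cont_of_ex_derive (f : R -> R) x : ex_derive f x -> continuity_pt f x.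
Proof. intros H. apply continuity_pt_filterlim. exact (ex_derive_continuous (K:=R_AbsRing) (V:=R_NormedModule) f x H). Qed.

Lemma continuity_exp : continuity exp.
Proof. intros x. apply cont_of_ex_derive. auto_derive. easy. Qed.

Ltac cont2d :=
  repeat first
    [ apply continuity_2d_pt_const
    | apply continuity_2d_pt_id1
    | apply continuity_2d_pt_id2
    | apply continuity_2d_pt_mult
    | apply continuity_2d_pt_plus
    | apply continuity_2d_pt_minus
    | apply continuity_2d_pt_opp
    | (apply continuity_1d_2d_pt_comp; [apply continuity_exp|])
    | (apply continuity_1d_2d_pt_comp; [apply continuity_cos|])
    | (apply continuity_1d_2d_pt_comp; [apply continuity_sin|]) ].

Lemma sq1_pos v : 0 < 1 + v * v.
Proof. pose proof (Rle_0_sqr v). unfold Rsqr in H. lra. Qed.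
Lemma sq1_neq v : 1 + v * v <> 0.
Proof. pose proof (sq1_pos v). lra. Qed.
Lemma sq1_neq' v : 1 + v ^ 2 <> 0.
Proof. pose proof (sq1_pos v). simpl. rewrite Rmult_1_r. lra. Qed.
Lemma sq1_neq'' v : 1 + v * (v * 1) <> 0.
Proof. rewrite Rmult_1_r. apply sq1_neq. Qed.
Hint Resolve sq1_neq sq1_neq' sq1_neq'' : core.

Lemma scalR (a b : R) : scal a b = a * b.
Proof. reflexivity. Qed.

Definition gaussf (x : R) := exp (-(x^2)).
Definition gF (t : R) := RInt gaussf 0 t.
Definition gf (t x : R) := exp (-(t^2*(1+x^2))) / (1+x^2).
Definition gG (t : R) := RInt (gf t) 0 1.

Lemma gaussf_cont x : continuous gaussf x.
Proof. apply contR. unfold gaussf. auto_derive. easy. Qed.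

Lemma gaussf_ex a b : ex_RInt gaussf a b.
Proof. apply exRI. intros. apply gaussf_cont. Qed.

Lemma gF_derive t : is_derive gF t (gaussf t).
Proof.
  apply is_derive_RInt with 0.
  - apply filter_forall. intros b. apply RInt_correct, gaussf_ex.
  - apply gaussf_cont.
Qed.

Lemma gf_Derive u v : Derive (fun z => gf z v) u = -2*u*exp(-(u*u*(1+v*v))).
Proof.
  apply is_derive_unique. unfold gf. auto_derive.
  - easy.
  - rewrite !Rmult_1_r. field. auto.
Qed.

Lemma gf_ex t a b : ex_RInt (gf t) a b.
Proof. apply exRI. intros. apply contR. unfold gf.
  auto_derive. auto. Qed.


Lemma gG_derive t : is_derive gG t (-2 * exp (-(t^2)) * gF t).
Proof.
  unfold gG.
  assert (H : is_derive (fun t0 => RInt (fun x => gf t0 x) 0 1) t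
     (RInt (fun x => Derive (fun u => gf u x) t) 0 1)).
  { apply (is_derive_RInt_param gf 0 1 t).
    - apply filter_forall. intros t0 x Hx. unfold gf. auto_derive. auto.
    - intros x Hx. eapply continuity_2d_pt_ext.
      { intros u v. symmetry. apply gf_Derive. }
      cont2d.
    - apply filter_forall. intros y. apply gf_ex. }
  replace (-2 * exp (-(t^2)) * gF t) with (RInt (fun x => Derive (fun u => gf u x) t) 0 1); [exact H|].
  clear H.
  assert (Hc : is_RInt (fun y => scal t (gaussf (t*y+0))) 0 1 (gF t)).
  { apply (is_RInt_comp_lin gaussf t 0 0 1). assert (E1: t*0+0 = 0) by ring. assert (E2 : t*1+0 = t) by ring. rewrite E1, E2.
    apply (RInt_correct (V:=R_CompleteNormedModule)), gaussf_ex. }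
  apply (is_RInt_scal _ _ _ (-2 * exp (-(t^2)))) in Hc.
  apply (is_RInt_unique (V:=R_CompleteNormedModule)).
  eapply is_RInt_ext; [|exact Hc].
  intros x _. rewrite gf_Derive. unfold gaussf, scal; simpl; unfold mult; simpl.
  replace (-(t*t*(1+x*x))) with (-(t*(t*1)) + -((t*x+0)*((t*x+0)*1))) by ring.
  rewrite exp_plus. ring.
Qed.

Lemma exp_mono x y : x <= y -> exp x <= exp y.
Proof. intros [H|H]; [left; now apply exp_increasing | subst; lra]. Qed.

Lemma gG0 : gG 0 = PI / 4.
Proof.
  unfold gG.
  rewrite (RInt_ext _ (fun x => / (1 + x^2))).
  2: { intros x _. unfold gf. replace (-(0^2*(1+x^2))) with 0 by ring. rewrite exp_0. unfold Rdiv. apply Rmult_1_l. }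
  rewrite <- atan_1.
  replace (atan 1) with (minus (atan 1) (atan 0)) by (rewrite atan_0; unfold minus, plus, opp; simpl; ring).
  apply (is_RInt_unique (V:=R_CompleteNormedModule)).
  apply (is_RInt_derive (V:=R_CompleteNormedModule)).
  - intros x _. apply is_derive_Reals. apply derivable_pt_lim_atan.
  - intros x _. apply contR. auto_derive. auto.
Qed.

Lemma gF0 : gF 0 = 0.
Proof. unfold gF. apply (RInt_point (V:=R_CompleteNormedModule)). Qed.

Lemma HF_const t : 0 <= t -> gF t * gF t + gG t = PI / 4.
Proof.
  intros [Ht|Ht]; [|subst; rewrite gF0, gG0; ring].
  assert (Heq : (fun s => gF s * gF s + gG s) 0 = (fun s => gF s * gF s + gG s) t).
  2: { simpl in Heq. rewrite gF0, gG0 in Heq. lra. }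
  apply (eq_is_derive (V:=R_NormedModule) (fun s => gF s * gF s + gG s) 0 t); [|lra].
  intros s _.
  replace (@zero R_NormedModule) with (plus (plus (mult (gaussf s) (gF s)) (mult (gF s) (gaussf s))) (-2 * exp (-(s^2)) * gF s)).
  2: { unfold gaussf, plus, mult, zero; simpl. ring. }
  apply (is_derive_plus (V:=R_NormedModule) (fun s => gF s * gF s)).
  - apply (is_derive_mult gF gF); try apply gF_derive. intros; apply Rmult_comm.
  - apply gG_derive.
Qed.

Lemma gF_ge0 t : 0 <= t -> 0 <= gF t.
Proof. intros Ht. apply RInt_ge_0; auto. apply gaussf_ex. intros. unfold gaussf. left; apply exp_pos. Qed.

Lemma gG_bound t : 0 <= gG t <= exp (-(t^2)).
Proof.
  split.
  - apply RInt_ge_0; [lra| apply gf_ex |]. intros x _. unfold gf.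
    apply Rlt_le, Rdiv_lt_0_compat; [apply exp_pos|]. pose proof (sq1_pos x). simpl; lra.
  - replace (exp (-(t^2))) with (RInt (fun _ => exp (-(t^2))) 0 1).
    2: { rewrite RInt_const. unfold scal; simpl; unfold mult; simpl. ring. }
    apply RInt_le; [lra|apply gf_ex| apply ex_RInt_const|].
    intros x _. unfold gf.
    assert (H1 : exp (-(t^2*(1+x^2))) <= exp (-(t^2))).
    { apply exp_mono. pose proof (pow2_ge_0 t). pose proof (pow2_ge_0 x). nra. }
    assert (H2: 1 <= 1 + x^2) by (pose proof (pow2_ge_0 x); lra).
    pose proof (exp_pos (-(t^2*(1+x^2)))).
    apply (Rle_trans _ (exp (-(t^2*(1+x^2))))); [|exact H1].
    unfold Rdiv. rewrite <- (Rmult_1_r (exp _)) at 2. apply Rmult_le_compat_l; [lra|].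
    rewrite <- Rinv_1. apply Rinv_le_contravar; lra.
Qed.

Definition sPI := sqrt PI / 2.

Lemma sPI_pos : 0 < sPI.
Proof. unfold sPI. pose proof PI_RGT_0. pose proof (sqrt_lt_R0 PI H). lra. Qed.

Lemma sPI_sq : sPI * sPI = PI / 4.
Proof. unfold sPI. pose proof PI_RGT_0. replace (sqrt PI / 2 * (sqrt PI / 2)) with (sqrt PI * sqrt PI / 4) by field.
  rewrite sqrt_sqrt; lra. Qed.

Lemma gF_lim : forall eps, 0 < eps -> exists M, 0 <= M /\ forall t, M <= t -> Rabs (gF t - sPI) < eps.
Proof.
  intros eps Heps.
  pose proof sPI_pos.
  destruct (decay_gauss 1 0 0 (eps * sPI)) as [M [HM0 HM]]; [nra|].
  exists M. split; [lra|]. intros t Ht.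
  assert (Ht0 : 0 <= t) by lra.
  specialize (HM t). rewrite Rabs_right in HM by lra. specialize (HM Ht).
  assert (E1 : exp (-(t^2)) <= exp (0 * t - t^2/2 + 0)).
  { apply exp_mono. pose proof (pow2_ge_0 t). lra. }
  pose proof (HF_const t Ht0) as HC. pose proof (gG_bound t) as HB.
  pose proof (gF_ge0 t Ht0). pose proof sPI_sq.
  assert (Habs : Rabs (gF t - sPI) * (gF t + sPI) = gG t).
  { rewrite <- (Rabs_right (gF t + sPI)) by lra. rewrite <- Rabs_mult.
    replace ((gF t - sPI) * (gF t + sPI)) with (- gG t) by nra.
    rewrite Rabs_Ropp. apply Rabs_right. lra. }
  pose proof (Rabs_pos (gF t - sPI)).
  assert (Rabs (gF t - sPI) * sPI < eps * sPI) by nra.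
  nra.
Qed.

Definition L2 (g : R -> R -> R) (l : R) := forall eps, 0 < eps ->
  exists M, forall a b, a <= -M -> M <= b -> Rabs (g a b - l) < eps.

Lemma gF_odd t : gF (-t) = - gF t.
Proof.
  assert (H1 : is_RInt (fun y => scal (-1) (gaussf (-1*y+0))) 0 t (gF (-t))).
  { apply (is_RInt_comp_lin gaussf (-1) 0 0 t).
    assert (E1: -1*0+0 = 0) by ring. assert (E2 : -1*t+0 = -t) by ring. rewrite E1, E2.
    apply (RInt_correct (V:=R_CompleteNormedModule)), gaussf_ex. }
  assert (H2 : is_RInt (fun y => -1 * (gaussf y)) 0 t (-1 * (gF t))).
  { exact (is_RInt_scal (V:=R_NormedModule) _ _ _ (-1) _ (RInt_correct (V:=R_CompleteNormedModule) _ _ _ (gaussf_ex 0 t))). }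
  assert (H3 : is_RInt (fun y => -1 * (gaussf y)) 0 t (gF (-t))).
  { eapply is_RInt_ext; [|exact H1]. intros x _. unfold gaussf.
    assert (E: -1*x+0 = -x) by ring. rewrite E.
    change (-1 * exp (- (-x)^2) = -1 * exp (-x^2)).
    replace ((-x)^2) with (x^2) by ring. reflexivity. }
  apply (is_RInt_unique (V:=R_CompleteNormedModule)) in H2.
  apply (is_RInt_unique (V:=R_CompleteNormedModule)) in H3.
  assert (E : gF (-t) = -1 * gF t) by (rewrite <- H3; exact H2). rewrite E. lra.
Qed.

Lemma gauss_RInt_ab a b : RInt gaussf a b = gF b - gF a.
Proof.
  unfold gF. pose proof (RInt_Chasles (V:=R_CompleteNormedModule) gaussf 0 a b (gaussf_ex _ _) (gaussf_ex _ _)) as H.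
  change (@eq R (RInt gaussf a b) (RInt gaussf 0 b - RInt gaussf 0 a)).
  assert (H' : RInt gaussf 0 a + RInt gaussf a b = RInt gaussf 0 b) by exact H.
  lra.
Qed.

Lemma gauss_L2 : L2 (fun a b => RInt gaussf a b) (sqrt PI).
Proof.
  intros eps Heps.
  destruct (gF_lim (eps/2)) as [M [HM0 HM]]; [lra|].
  exists M. intros a b Ha Hb.
  rewrite gauss_RInt_ab.
  pose proof (HM b Hb). pose proof (HM (-a) ltac:(lra)).
  replace a with (- - a) by ring. rewrite gF_odd.
  replace (sqrt PI) with (2 * sPI) by (unfold sPI; field).
  replace (gF b - - gF (- a) - 2 * sPI) with ((gF b - sPI) + (gF (-a) - sPI)) by ring.
  eapply Rle_lt_trans; [apply Rabs_triang|]. lra.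
Qed.

Lemma herm0 x : hermite 0 x = 1.
Proof. reflexivity. Qed.
Lemma herm1 x : hermite 1 x = 2 * x.
Proof. reflexivity. Qed.
Lemma herm_snd k x : snd (hermite2 k x) = hermite (S k) x.
Proof. unfold hermite. simpl. destruct (hermite2 k x). reflexivity. Qed.
Lemma herm_rec k x : hermite (S (S k)) x = 2 * x * hermite (S k) x - 2 * INR (S k) * hermite k x.
Proof.
  rewrite <- herm_snd. rewrite <- herm_snd. unfold hermite.
  simpl. destruct (hermite2 k x). reflexivity.
Qed.

Definition hermite_d (k : nat) (x : R) : R :=
  match k with O => 0 | S k' => 2 * INR k * hermite k' x end.

Lemma herm_succ k x : hermite (S k) x = 2 * x * hermite k x - hermite_d k x.
Proof.
  destruct k as [|k]. { rewrite herm1, herm0. simpl. ring. }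
  rewrite herm_rec. cbn [hermite_d]. ring.
Qed.

Lemma herm_derive k x : is_derive (hermite k) x (hermite_d k x).
Proof.
  revert x.
  assert (H : forall k, (forall x, is_derive (hermite k) x (hermite_d k x)) /\
                        (forall x, is_derive (hermite (S k)) x (hermite_d (S k) x))).
  { clear k. intros k. induction k as [|k [IH1 IH2]].
    - split; intros x.
      + simpl. apply (is_derive_ext (fun _ => 1)); [intros; reflexivity|]. auto_derive; easy.
      + apply (is_derive_ext (fun x => 2 * x)); [intros; reflexivity|].
        cbn [hermite_d]. rewrite herm0. auto_derive; [easy|]. simpl. ring.
    - split; [exact IH2|]. intros x.
      apply (is_derive_ext (fun x => 2 * x * hermite (S k) x - 2 * INR (S k) * hermite k x)).
      { intros; symmetry; apply herm_rec. }
      assert (Hd : is_derive (fun x => 2 * x * hermite (S k) x - 2 * INR (S k) * hermite k x) x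
                     (2 * hermite (S k) x + 2 * x * hermite_d (S k) x - 2 * INR (S k) * hermite_d k x)).
      { apply (is_derive_minus (V:=R_NormedModule) (fun x => 2 * x * hermite (S k) x) (fun x => 2 * INR (S k) * hermite k x)).
        - replace (2 * hermite (S k) x + 2 * x * hermite_d (S k) x) with
            (plus (mult 2 (hermite (S k) x)) (mult (2 * x) (hermite_d (S k) x))) by reflexivity.
          apply (is_derive_mult (fun x => 2 * x) (hermite (S k))).
          + auto_derive; [easy|ring].
          + apply IH2.
          + intros; apply Rmult_comm.
        - apply (is_derive_scal (hermite k) x (2 * INR (S k))). apply IH1. }
      replace (hermite_d (S (S k)) x) with (2 * hermite (S k) x + 2 * x * hermite_d (S k) x - 2 * INR (S k) * hermite_d k x).
      { exact Hd. }
      destruct k as [|k].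
      + cbn [hermite_d]. rewrite herm1, herm0. simpl. ring.
      + cbn [hermite_d]. rewrite herm_rec. rewrite !S_INR. ring. }
  intros x. apply (H k).
Qed.

Lemma herm_ex_derive k x : ex_derive (hermite k) x.
Proof. eexists. apply herm_derive. Qed.

Lemma hermd_ex_derive k x : ex_derive (hermite_d k) x.
Proof.
  destruct k as [|k].
  - apply (ex_derive_ext (fun _ => 0)); [intros; reflexivity|]. auto_derive; easy.
  - apply (ex_derive_ext (fun y => 2 * INR (S k) * hermite k y)); [intros; reflexivity|].
    apply (ex_derive_scal (hermite k) (2 * INR (S k)) x). apply herm_ex_derive.
Qed.

Lemma herm_bound k : exists A, 0 <= A /\ forall x, Rabs (hermite k x) <= A * exp (INR k * Rabs x).
Proof.
  assert (H : forall k, exists A, 0 <= A /\ forall x,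
    Rabs (hermite k x) <= A * exp (INR k * Rabs x) /\ Rabs (hermite (S k) x) <= A * exp (INR (S k) * Rabs x)).
  { clear k. intros k. induction k as [|k IH].
    - exists 2. split; [lra|]. intros x. rewrite herm0, herm1. simpl INR. split.
      + rewrite Rmult_0_l, exp_0, Rabs_R1. lra.
      + rewrite Rmult_1_l, Rabs_mult, Rabs_right by lra.
        pose proof (exp_ineq1_le (Rabs x)). lra.
    - destruct IH as [A [HA IH]].
      exists (A * (2 * INR k + 4)). pose proof (pos_INR k). split; [nra|]. intros x.
      destruct (IH x) as [H1 H2]. split.
      + eapply Rle_trans; [exact H2|]. apply Rmult_le_compat_r; [left; apply exp_pos|]. nra.
      + rewrite herm_rec.
        assert (Ex1 : Rabs x <= exp (Rabs x)) by (pose proof (exp_ineq1_le (Rabs x)); lra).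
        assert (Ex2 : exp (INR k * Rabs x) <= exp (INR (S (S k)) * Rabs x)).
        { apply exp_mono. rewrite !S_INR. pose proof (Rabs_pos x). nra. }
        assert (Ex3 : exp (Rabs x) * exp (INR (S k) * Rabs x) = exp (INR (S (S k)) * Rabs x)).
        { rewrite <- exp_plus. f_equal. rewrite (S_INR (S k)). ring. }
        eapply Rle_trans; [apply Rabs_triang|]. rewrite Rabs_Ropp, !Rabs_mult.
        rewrite (Rabs_right 2) by lra. rewrite (Rabs_right (INR (S k))) by (apply Rle_ge, pos_INR).
        pose proof (Rabs_pos (hermite (S k) x)). pose proof (Rabs_pos (hermite k x)). pose proof (Rabs_pos x).
        pose proof (exp_pos (INR (S k) * Rabs x)). pose proof (exp_pos (INR k * Rabs x)).
        assert (2 * Rabs x * Rabs (hermite (S k) x) <= 2 * A * exp (INR (S (S k)) * Rabs x)).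
        { rewrite <- Ex3. assert (Rabs x * Rabs (hermite (S k) x) <= exp (Rabs x) * (A * exp (INR (S k) * Rabs x))).
          { apply Rmult_le_compat; auto. } nra. }
        assert (2 * INR (S k) * Rabs (hermite k x) <= 2 * INR (S k) * A * exp (INR (S (S k)) * Rabs x)).
        { rewrite !Rmult_assoc. apply Rmult_le_compat_l; [lra|]. apply Rmult_le_compat_l; [rewrite S_INR; lra|].
          eapply Rle_trans; [exact H1|]. apply Rmult_le_compat_l; auto. }
        rewrite S_INR in *. pose proof (exp_pos (INR (S (S k)) * Rabs x)). nra. }
  destruct (H k) as [A [HA HA']]. exists A. split; auto. intros x. apply HA'.
Qed.

Lemma isR_lin2 (f g : R -> R) a b If Ig al be :
  is_RInt f a b If -> is_RInt g a b Ig ->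
  is_RInt (fun x => al * f x + be * g x) a b (al * If + be * Ig).
Proof.
  intros Hf Hg.
  exact (is_RInt_plus (V:=R_NormedModule) _ _ _ _ _ _
    (is_RInt_scal (V:=R_NormedModule) _ _ _ al _ Hf) (is_RInt_scal (V:=R_NormedModule) _ _ _ be _ Hg)).
Qed.

Lemma isR_uniq (f : R -> R) a b l : is_RInt f a b l -> @eq R (RInt f a b) l.
Proof. intros H. exact (is_RInt_unique (V:=R_CompleteNormedModule) f a b l H). Qed.

Lemma isR_correct (f : R -> R) a b : ex_RInt f a b -> is_RInt f a b (RInt f a b).
Proof. intros H. exact (RInt_correct (V:=R_CompleteNormedModule) f a b H). Qed.

Lemma isR_deriv (F f : R -> R) a b : (forall x, is_derive F x (f x)) -> (forall x, ex_derive f x) ->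
  is_RInt f a b (F b - F a).
Proof.
  intros H1 H2. exact (is_RInt_derive (V:=R_CompleteNormedModule) F f a b (fun x _ => H1 x) (fun x _ => contR f x (H2 x))).
Qed.

Lemma isR_ext (f g : R -> R) a b l : (forall x, f x = g x) -> is_RInt f a b l -> is_RInt g a b l.
Proof. intros H. apply is_RInt_ext. intros; apply H. Qed.

Section Shift.
Variables u v : R.

Definition ph (s x : R) := -((x - s*u)*(x - s*u)) + (s*v)*(s*v).
Definition th (s x : R) := 2*(s*v)*(x - s*u).
Definition R1 (s x : R) := exp (ph s x) * cos (th s x).
Definition R2 (s x : R) := exp (ph s x) * sin (th s x).

Definition DX1 (s x : R) := exp (ph s x) * ((-2*(x - s*u)) * cos (th s x) - (2*(s*v)) * sin (th s x)).
Definition DX2 (s x : R) := exp (ph s x) * ((-2*(x - s*u)) * sin (th s x) + (2*(s*v)) * cos (th s x)).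
Definition DS1 (s x : R) := exp (ph s x) * ((2*u*(x - s*u) + 2*s*(v*v)) * cos (th s x) - (2*v*(x - 2*s*u)) * sin (th s x)).
Definition DS2 (s x : R) := exp (ph s x) * ((2*u*(x - s*u) + 2*s*(v*v)) * sin (th s x) + (2*v*(x - 2*s*u)) * cos (th s x)).

Lemma R1_dx s x : is_derive (R1 s) x (DX1 s x).
Proof. unfold R1, DX1, ph, th. auto_derive; [easy|]. unfold Rminus; ring. Qed.
Lemma R2_dx s x : is_derive (R2 s) x (DX2 s x).
Proof. unfold R2, DX2, ph, th. auto_derive; [easy|]. unfold Rminus; ring. Qed.
Lemma R1_ds s x : is_derive (fun s => R1 s x) s (DS1 s x).
Proof. unfold R1, DS1, ph, th. auto_derive; [easy|]. unfold Rminus; ring. Qed.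
Lemma R2_ds s x : is_derive (fun s => R2 s x) s (DS2 s x).
Proof. unfold R2, DS2, ph, th. auto_derive; [easy|]. unfold Rminus; ring. Qed.

Lemma DS1_eq s x : DS1 s x = -(u * DX1 s x - v * DX2 s x).
Proof. unfold DS1, DX1, DX2. ring. Qed.
Lemma DS2_eq s x : DS2 s x = -(u * DX2 s x + v * DX1 s x).
Proof. unfold DS2, DX1, DX2. ring. Qed.

Lemma R1_exd s x : ex_derive (R1 s) x.
Proof. eexists; apply R1_dx. Qed.
Lemma R2_exd s x : ex_derive (R2 s) x.
Proof. eexists; apply R2_dx. Qed.
Lemma DX1_exd s x : ex_derive (DX1 s) x.
Proof. unfold DX1, ph, th. auto_derive. easy. Qed.
Lemma DX2_exd s x : ex_derive (DX2 s) x.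
Proof. unfold DX2, ph, th. auto_derive. easy. Qed.

Lemma R1_ex s a b : ex_RInt (R1 s) a b.
Proof. apply exRI_d. apply R1_exd. Qed.
Lemma R2_ex s a b : ex_RInt (R2 s) a b.
Proof. apply exRI_d. apply R2_exd. Qed.

Definition W1 a b s := -(u * (R1 s b - R1 s a) - v * (R2 s b - R2 s a)).
Definition W2 a b s := -(u * (R2 s b - R2 s a) + v * (R1 s b - R1 s a)).

Lemma DS1_int a b s : is_RInt (DS1 s) a b (W1 a b s).
Proof.
  pose proof (isR_deriv (R1 s) (DX1 s) a b (R1_dx s) (DX1_exd s)) as H1.
  pose proof (isR_deriv (R2 s) (DX2 s) a b (R2_dx s) (DX2_exd s)) as H2.
  pose proof (isR_lin2 _ _ a b _ _ (-u) v H1 H2) as H.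
  unfold W1. replace (-(u * (R1 s b - R1 s a) - v * (R2 s b - R2 s a))) with
    (-u * (R1 s b - R1 s a) + v * (R2 s b - R2 s a)) by ring.
  eapply isR_ext; [|exact H]. intros x. rewrite DS1_eq. ring.
Qed.

Lemma DS2_int a b s : is_RInt (DS2 s) a b (W2 a b s).
Proof.
  pose proof (isR_deriv (R1 s) (DX1 s) a b (R1_dx s) (DX1_exd s)) as H1.
  pose proof (isR_deriv (R2 s) (DX2 s) a b (R2_dx s) (DX2_exd s)) as H2.
  pose proof (isR_lin2 _ _ a b _ _ (-v) (-u) H1 H2) as H.
  unfold W2. replace (-(u * (R2 s b - R2 s a) + v * (R1 s b - R1 s a))) with
    (-v * (R1 s b - R1 s a) + -u * (R2 s b - R2 s a)) by ring.
  eapply isR_ext; [|exact H]. intros x. rewrite DS2_eq. ring.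
Qed.

Lemma Psi1_derive a b s : is_derive (fun s => RInt (R1 s) a b) s (W1 a b s).
Proof.
  assert (H : is_derive (fun s0 => RInt (fun x => R1 s0 x) a b) s
     (RInt (fun x => Derive (fun z => R1 z x) s) a b)).
  { apply (is_derive_RInt_param R1 a b s).
    - apply filter_forall. intros s0 x _. eexists. apply R1_ds.
    - intros x _. eapply continuity_2d_pt_ext.
      { intros s0 x0. symmetry. apply is_derive_unique. apply R1_ds. }
      unfold DS1, ph, th. cont2d.
    - apply filter_forall. intros y. apply R1_ex. }
  replace (W1 a b s) with (RInt (fun x => Derive (fun z => R1 z x) s) a b); [exact H|].
  apply isR_uniq. eapply isR_ext; [|apply DS1_int]. intros x. symmetry. apply is_derive_unique, R1_ds.
Qed.

Lemma Psi2_derive a b s : is_derive (fun s => RInt (R2 s) a b) s (W2 a b s).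
Proof.
  assert (H : is_derive (fun s0 => RInt (fun x => R2 s0 x) a b) s
     (RInt (fun x => Derive (fun z => R2 z x) s) a b)).
  { apply (is_derive_RInt_param R2 a b s).
    - apply filter_forall. intros s0 x _. eexists. apply R2_ds.
    - intros x _. eapply continuity_2d_pt_ext.
      { intros s0 x0. symmetry. apply is_derive_unique. apply R2_ds. }
      unfold DS2, ph, th. cont2d.
    - apply filter_forall. intros y. apply R2_ex. }
  replace (W2 a b s) with (RInt (fun x => Derive (fun z => R2 z x) s) a b); [exact H|].
  apply isR_uniq. eapply isR_ext; [|apply DS2_int]. intros x. symmetry. apply is_derive_unique, R2_ds.
Qed.

End Shift.

Lemma ph_bound u v s x : 0 <= s <= 1 -> ph u v s x <= - x^2/2 + (u*u + v*v).
Proof.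
  intros Hs. unfold ph.
  assert (0 <= (x - 2*(s*u))*(x - 2*(s*u))) by (pose proof (Rle_0_sqr (x - 2*(s*u))); unfold Rsqr in *; lra).
  assert (s*s <= 1) by nra.
  assert (0 <= u*u) by nra. assert (0 <= v*v) by nra.
  assert ((s*u)*(s*u) <= u*u) by nra. assert ((s*v)*(s*v) <= v*v) by nra.
  simpl. nra.
Qed.

Definition Phi u v x := exp (- x^2/2 + (u*u + v*v)).

Lemma R1_bound u v s x : 0 <= s <= 1 -> Rabs (R1 u v s x) <= Phi u v x.
Proof.
  intros Hs. unfold R1, Phi. rewrite Rabs_mult, (Rabs_right (exp _)) by (left; apply exp_pos).
  pose proof (exp_mono _ _ (ph_bound u v s x Hs)). pose proof (exp_pos (ph u v s x)).
  pose proof (COS_bound (th u v s x)). assert (Rabs (cos (th u v s x)) <= 1) by (apply Rabs_le; lra).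
  pose proof (Rabs_pos (cos (th u v s x))). nra.
Qed.

Lemma R2_bound u v s x : 0 <= s <= 1 -> Rabs (R2 u v s x) <= Phi u v x.
Proof.
  intros Hs. unfold R2, Phi. rewrite Rabs_mult, (Rabs_right (exp _)) by (left; apply exp_pos).
  pose proof (exp_mono _ _ (ph_bound u v s x Hs)). pose proof (exp_pos (ph u v s x)).
  pose proof (SIN_bound (th u v s x)). assert (Rabs (sin (th u v s x)) <= 1) by (apply Rabs_le; lra).
  pose proof (Rabs_pos (sin (th u v s x))). nra.
Qed.

Lemma W1_bound u v a b s : 0 <= s <= 1 -> Rabs (W1 u v a b s) <= (Rabs u + Rabs v) * (Phi u v a + Phi u v b).
Proof.
  intros Hs. unfold W1. rewrite Rabs_Ropp.
  eapply Rle_trans; [apply Rabs_triang|]. rewrite Rabs_Ropp, !Rabs_mult.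
  pose proof (R1_bound u v s a Hs). pose proof (R1_bound u v s b Hs).
  pose proof (R2_bound u v s a Hs). pose proof (R2_bound u v s b Hs).
  pose proof (Rabs_triang_inv2 (R1 u v s b) (R1 u v s a)).
  assert (Rabs (R1 u v s b - R1 u v s a) <= Phi u v a + Phi u v b).
  { eapply Rle_trans; [apply Rabs_triang|]. rewrite Rabs_Ropp. lra. }
  assert (Rabs (R2 u v s b - R2 u v s a) <= Phi u v a + Phi u v b).
  { eapply Rle_trans; [apply Rabs_triang|]. rewrite Rabs_Ropp. lra. }
  pose proof (Rabs_pos u). pose proof (Rabs_pos v). nra.
Qed.

Lemma W2_bound u v a b s : 0 <= s <= 1 -> Rabs (W2 u v a b s) <= (Rabs u + Rabs v) * (Phi u v a + Phi u v b).
Proof.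
  intros Hs. unfold W2. rewrite Rabs_Ropp.
  eapply Rle_trans; [apply Rabs_triang|]. rewrite !Rabs_mult.
  pose proof (R1_bound u v s a Hs). pose proof (R1_bound u v s b Hs).
  pose proof (R2_bound u v s a Hs). pose proof (R2_bound u v s b Hs).
  assert (Rabs (R1 u v s b - R1 u v s a) <= Phi u v a + Phi u v b).
  { eapply Rle_trans; [apply Rabs_triang|]. rewrite Rabs_Ropp. lra. }
  assert (Rabs (R2 u v s b - R2 u v s a) <= Phi u v a + Phi u v b).
  { eapply Rle_trans; [apply Rabs_triang|]. rewrite Rabs_Ropp. lra. }
  pose proof (Rabs_pos u). pose proof (Rabs_pos v). nra.
Qed.

Lemma W1_exd u v a b s : ex_derive (W1 u v a b) s.
Proof. unfold W1, R1, R2, ph, th. auto_derive. easy. Qed.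
Lemma W2_exd u v a b s : ex_derive (W2 u v a b) s.
Proof. unfold W2, R1, R2, ph, th. auto_derive. easy. Qed.

Lemma Psi1_diff u v a b : Rabs (RInt (R1 u v 1) a b - RInt (R1 u v 0) a b) <= (Rabs u + Rabs v) * (Phi u v a + Phi u v b).
Proof.
  pose proof (isR_deriv (fun s => RInt (R1 u v s) a b) (W1 u v a b) 0 1 (Psi1_derive u v a b) (W1_exd u v a b)) as H.
  apply isR_uniq in H. simpl in H. rewrite <- H.
  replace ((Rabs u + Rabs v) * (Phi u v a + Phi u v b)) with ((1 - 0) * ((Rabs u + Rabs v) * (Phi u v a + Phi u v b))) by ring.
  apply abs_RInt_le_const; [lra| apply exRI_d, W1_exd |]. intros t Ht. apply W1_bound. lra.
Qed.

Lemma Psi2_diff u v a b : Rabs (RInt (R2 u v 1) a b - RInt (R2 u v 0) a b) <= (Rabs u + Rabs v) * (Phi u v a + Phi u v b).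
Proof.
  pose proof (isR_deriv (fun s => RInt (R2 u v s) a b) (W2 u v a b) 0 1 (Psi2_derive u v a b) (W2_exd u v a b)) as H.
  apply isR_uniq in H. simpl in H. rewrite <- H.
  replace ((Rabs u + Rabs v) * (Phi u v a + Phi u v b)) with ((1 - 0) * ((Rabs u + Rabs v) * (Phi u v a + Phi u v b))) by ring.
  apply abs_RInt_le_const; [lra| apply exRI_d, W2_exd |]. intros t Ht. apply W2_bound. lra.
Qed.

Lemma Phi_pos u v x : 0 <= Phi u v x.
Proof. unfold Phi. left; apply exp_pos. Qed.

Lemma Phi_decay u v : forall eps, 0 < eps -> exists M, 0 <= M /\ forall x, M <= Rabs x -> Phi u v x < eps.
Proof.
  intros eps Heps. destruct (decay_gauss 1 0 (u*u+v*v) eps Heps) as [M [HM0 HM]].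
  exists M. split; auto. intros x Hx. specialize (HM x Hx). unfold Phi.
  replace (- x^2/2 + (u*u+v*v)) with (0 * Rabs x - x^2/2 + (u*u+v*v)) by field. lra.
Qed.

Lemma R1_0 u v x : R1 u v 0 x = gaussf x.
Proof.
  unfold R1, ph, th, gaussf.
  replace (2 * (0 * v) * (x - 0 * u)) with 0 by ring. rewrite cos_0.
  replace (- ((x - 0 * u) * (x - 0 * u)) + 0 * v * (0 * v)) with (- x^2) by ring. ring.
Qed.

Lemma R2_0 u v x : R2 u v 0 x = 0.
Proof.
  unfold R2, th. replace (2 * (0 * v) * (x - 0 * u)) with 0 by ring. rewrite sin_0. ring.
Qed.

Lemma RInt_zero a b : @eq R (RInt (fun _ => 0) a b) 0.
Proof.
  apply isR_uniq.
  assert (E : is_RInt (fun x => 0 * gaussf x) a b (0 * RInt gaussf a b)).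
  { exact (is_RInt_scal (V:=R_NormedModule) _ _ _ 0 _ (isR_correct _ _ _ (gaussf_ex a b))). }
  rewrite Rmult_0_l in E. eapply isR_ext; [|exact E]. intros; simpl; ring.
Qed.

Lemma shift_L2 u v (l1 l2 : R) :
  L2 (fun a b => RInt (R1 u v 0) a b) l1 -> L2 (fun a b => RInt (R2 u v 0) a b) l2 ->
  L2 (fun a b => RInt (R1 u v 1) a b) l1 /\ L2 (fun a b => RInt (R2 u v 1) a b) l2.
Proof.
  intros H1 H2.
  set (K := Rabs u + Rabs v + 1).
  assert (HK : 0 < K) by (unfold K; pose proof (Rabs_pos u); pose proof (Rabs_pos v); lra).
  split; intros eps Heps.
  - destruct (Phi_decay u v (eps / (4 * K))) as [M1 [HM1 HP]]. { apply Rdiv_lt_0_compat; lra. }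
    destruct (H1 (eps/2)) as [M2 HM2]; [lra|].
    exists (Rmax M1 M2). intros a b Ha Hb.
    pose proof (HM2 a b ltac:(pose proof (Rmax_r M1 M2); lra) ltac:(pose proof (Rmax_r M1 M2); lra)).
    pose proof (HP a ltac:(pose proof (Rmax_l M1 M2); rewrite Rabs_left1 by lra; lra)).
    pose proof (HP b ltac:(pose proof (Rmax_l M1 M2); rewrite Rabs_right by lra; lra)).
    pose proof (Psi1_diff u v a b).
    assert ((Rabs u + Rabs v) * (Phi u v a + Phi u v b) <= K * (eps/(4*K) + eps/(4*K))).
    { pose proof (Rabs_pos u). pose proof (Rabs_pos v). pose proof (Phi_pos u v a). pose proof (Phi_pos u v b).
      assert (Rabs u + Rabs v <= K) by (unfold K; lra).
      apply Rmult_le_compat; lra. }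
    assert (HK' : K <> 0) by (apply Rgt_not_eq; lra).
    assert (K * (eps/(4*K) + eps/(4*K)) = eps/2) by (field; exact HK').
    replace (RInt (R1 u v 1) a b - l1) with ((RInt (R1 u v 1) a b - RInt (R1 u v 0) a b) + (RInt (R1 u v 0) a b - l1)) by ring.
    eapply Rle_lt_trans; [apply Rabs_triang|]. lra.
  - destruct (Phi_decay u v (eps / (4 * K))) as [M1 [HM1 HP]]. { apply Rdiv_lt_0_compat; lra. }
    destruct (H2 (eps/2)) as [M2 HM2]; [lra|].
    exists (Rmax M1 M2). intros a b Ha Hb.
    pose proof (HM2 a b ltac:(pose proof (Rmax_r M1 M2); lra) ltac:(pose proof (Rmax_r M1 M2); lra)).
    pose proof (HP a ltac:(pose proof (Rmax_l M1 M2); rewrite Rabs_left1 by lra; lra)).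
    pose proof (HP b ltac:(pose proof (Rmax_l M1 M2); rewrite Rabs_right by lra; lra)).
    pose proof (Psi2_diff u v a b).
    assert ((Rabs u + Rabs v) * (Phi u v a + Phi u v b) <= K * (eps/(4*K) + eps/(4*K))).
    { pose proof (Rabs_pos u). pose proof (Rabs_pos v). pose proof (Phi_pos u v a). pose proof (Phi_pos u v b).
      assert (Rabs u + Rabs v <= K) by (unfold K; lra).
      apply Rmult_le_compat; lra. }
    assert (HK' : K <> 0) by (apply Rgt_not_eq; lra).
    assert (K * (eps/(4*K) + eps/(4*K)) = eps/2) by (field; exact HK').
    replace (RInt (R2 u v 1) a b - l2) with ((RInt (R2 u v 1) a b - RInt (R2 u v 0) a b) + (RInt (R2 u v 0) a b - l2)) by ring.
    eapply Rle_lt_trans; [apply Rabs_triang|]. lra.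
Qed.

Lemma shift_base u v :
  L2 (fun a b => RInt (R1 u v 1) a b) (sqrt PI) /\ L2 (fun a b => RInt (R2 u v 1) a b) 0.
Proof.
  apply shift_L2.
  - intros eps Heps. destruct (gauss_L2 eps Heps) as [M HM]. exists M. intros a b Ha Hb.
    rewrite (RInt_ext _ gaussf) by (intros; apply R1_0). apply HM; auto.
  - intros eps Heps. exists 0. intros a b _ _.
    rewrite (RInt_ext _ (fun _ => 0)) by (intros; apply R2_0). rewrite RInt_zero.
    rewrite Rminus_0_r, Rabs_R0. lra.
Qed.

Definition F1 k u v x := hermite k x * R1 u v 1 x.
Definition F2 k u v x := hermite k x * R2 u v 1 x.
Definition DF1 k u v x := hermite_d k x * R1 u v 1 x + hermite k x * DX1 u v 1 x.
Definition DF2 k u v x := hermite_d k x * R2 u v 1 x + hermite k x * DX2 u v 1 x.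

Lemma F1_d k u v x : is_derive (F1 k u v) x (DF1 k u v x).
Proof.
  unfold F1, DF1.
  exact (is_derive_mult (hermite k) (R1 u v 1) x _ _ (herm_derive k x) (R1_dx u v 1 x) Rmult_comm).
Qed.
Lemma F2_d k u v x : is_derive (F2 k u v) x (DF2 k u v x).
Proof.
  unfold F2, DF2.
  exact (is_derive_mult (hermite k) (R2 u v 1) x _ _ (herm_derive k x) (R2_dx u v 1 x) Rmult_comm).
Qed.

Lemma DF1_exd k u v x : ex_derive (DF1 k u v) x.
Proof.
  unfold DF1. apply (ex_derive_plus (K:=R_AbsRing) (V:=R_NormedModule) (fun x => hermite_d k x * R1 u v 1 x) (fun x => hermite k x * DX1 u v 1 x)).
  - apply ex_derive_mult. apply hermd_ex_derive. apply R1_exd.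
  - apply ex_derive_mult. apply herm_ex_derive. apply DX1_exd.
Qed.
Lemma DF2_exd k u v x : ex_derive (DF2 k u v) x.
Proof.
  unfold DF2. apply (ex_derive_plus (K:=R_AbsRing) (V:=R_NormedModule) (fun x => hermite_d k x * R2 u v 1 x) (fun x => hermite k x * DX2 u v 1 x)).
  - apply ex_derive_mult. apply hermd_ex_derive. apply R2_exd.
  - apply ex_derive_mult. apply herm_ex_derive. apply DX2_exd.
Qed.

Lemma F1_exd k u v x : ex_derive (F1 k u v) x.
Proof. eexists; apply F1_d. Qed.
Lemma F2_exd k u v x : ex_derive (F2 k u v) x.
Proof. eexists; apply F2_d. Qed.

Lemma F1_S k u v x : F1 (S k) u v x = 2*u * F1 k u v x + (-2*v) * F2 k u v x - DF1 k u v x.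
Proof.
  unfold F1, F2, DF1, DX1, R1, R2. rewrite herm_succ. unfold th, ph. ring.
Qed.
Lemma F2_S k u v x : F2 (S k) u v x = 2*u * F2 k u v x + 2*v * F1 k u v x - DF2 k u v x.
Proof.
  unfold F1, F2, DF2, DX2, R1, R2. rewrite herm_succ. unfold th, ph. ring.
Qed.

Definition Decay (B : R -> R) := forall eps, 0 < eps -> exists M, 0 <= M /\ forall x, M <= Rabs x -> Rabs (B x) < eps.

Lemma L2_comb g1 g2 l1 l2 al be B :
  L2 g1 l1 -> L2 g2 l2 -> Decay B ->
  L2 (fun a b => al * g1 a b + be * g2 a b - (B b - B a)) (al * l1 + be * l2).
Proof.
  intros H1 H2 HB eps Heps.
  set (K := Rabs al + Rabs be + 1).
  assert (HK : 0 < K) by (unfold K; pose proof (Rabs_pos al); pose proof (Rabs_pos be); lra).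
  destruct (H1 (eps / (4*K))) as [M1 HM1]; [apply Rdiv_lt_0_compat; lra|].
  destruct (H2 (eps / (4*K))) as [M2 HM2]; [apply Rdiv_lt_0_compat; lra|].
  destruct (HB (eps / 4)) as [M3 [HM3 HB3]]; [lra|].
  exists (Rmax M3 (Rmax M1 M2)). intros a b Ha Hb.
  pose proof (Rmax_l M3 (Rmax M1 M2)). pose proof (Rmax_r M3 (Rmax M1 M2)).
  pose proof (Rmax_l M1 M2). pose proof (Rmax_r M1 M2).
  specialize (HM1 a b ltac:(lra) ltac:(lra)). specialize (HM2 a b ltac:(lra) ltac:(lra)).
  pose proof (HB3 a ltac:(rewrite Rabs_left1 by lra; lra)).
  pose proof (HB3 b ltac:(rewrite Rabs_right by lra; lra)).
  replace (al * g1 a b + be * g2 a b - (B b - B a) - (al * l1 + be * l2)) with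
    (al * (g1 a b - l1) + be * (g2 a b - l2) + (- B b + B a)) by ring.
  assert (E1 : Rabs (al * (g1 a b - l1)) <= K * (eps / (4*K))).
  { rewrite Rabs_mult. apply Rmult_le_compat; try apply Rabs_pos; try lra. unfold K; pose proof (Rabs_pos be); lra. }
  assert (E2 : Rabs (be * (g2 a b - l2)) <= K * (eps / (4*K))).
  { rewrite Rabs_mult. apply Rmult_le_compat; try apply Rabs_pos; try lra. unfold K; pose proof (Rabs_pos al); lra. }
  assert (E3 : K * (eps / (4*K)) = eps / 4) by (field; apply Rgt_not_eq; lra).
  assert (E4 : Rabs (- B b + B a) <= Rabs (B b) + Rabs (B a)).
  { eapply Rle_trans; [apply Rabs_triang|]. rewrite Rabs_Ropp. lra. }
  eapply Rle_lt_trans; [apply Rabs_triang|].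
  pose proof (Rabs_triang (al * (g1 a b - l1)) (be * (g2 a b - l2))). lra.
Qed.

Lemma F1_decay k u v : Decay (F1 k u v).
Proof.
  destruct (herm_bound k) as [A [HA HAb]].
  intros eps Heps. destruct (decay_gauss A (INR k) (u*u+v*v) eps Heps) as [M [HM0 HM]].
  exists M. split; auto. intros x Hx. specialize (HM x Hx).
  unfold F1. rewrite Rabs_mult. pose proof (HAb x). pose proof (R1_bound u v 1 x ltac:(lra)).
  unfold Phi in H0.
  assert (A * exp (INR k * Rabs x) * exp (- x ^ 2 / 2 + (u * u + v * v)) = A * exp (INR k * Rabs x - x ^ 2 / 2 + (u * u + v * v))).
  { rewrite Rmult_assoc, <- exp_plus. f_equal. f_equal. field. }
  pose proof (Rabs_pos (hermite k x)). pose proof (Rabs_pos (R1 u v 1 x)).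
  pose proof (exp_pos (INR k * Rabs x)).
  assert (Rabs (hermite k x) * Rabs (R1 u v 1 x) <= A * exp (INR k * Rabs x) * exp (- x ^ 2 / 2 + (u * u + v * v))).
  { apply Rmult_le_compat; auto. }
  lra.
Qed.

Lemma F2_decay k u v : Decay (F2 k u v).
Proof.
  destruct (herm_bound k) as [A [HA HAb]].
  intros eps Heps. destruct (decay_gauss A (INR k) (u*u+v*v) eps Heps) as [M [HM0 HM]].
  exists M. split; auto. intros x Hx. specialize (HM x Hx).
  unfold F2. rewrite Rabs_mult. pose proof (HAb x). pose proof (R2_bound u v 1 x ltac:(lra)).
  unfold Phi in H0.
  assert (A * exp (INR k * Rabs x) * exp (- x ^ 2 / 2 + (u * u + v * v)) = A * exp (INR k * Rabs x - x ^ 2 / 2 + (u * u + v * v))).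
  { rewrite Rmult_assoc, <- exp_plus. f_equal. f_equal. field. }
  pose proof (Rabs_pos (hermite k x)). pose proof (Rabs_pos (R2 u v 1 x)).
  pose proof (exp_pos (INR k * Rabs x)).
  assert (Rabs (hermite k x) * Rabs (R2 u v 1 x) <= A * exp (INR k * Rabs x) * exp (- x ^ 2 / 2 + (u * u + v * v))).
  { apply Rmult_le_compat; auto. }
  lra.
Qed.

Lemma F1_S_int k u v a b : @eq R (RInt (F1 (S k) u v) a b)
  (2*u * RInt (F1 k u v) a b + (-2*v) * RInt (F2 k u v) a b - (F1 k u v b - F1 k u v a)).
Proof.
  apply isR_uniq.
  pose proof (isR_lin2 _ _ a b _ _ (2*u) (-2*v) (isR_correct _ a b (exRI_d _ a b (F1_exd k u v))) (isR_correct _ a b (exRI_d _ a b (F2_exd k u v)))) as H.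
  pose proof (isR_deriv _ _ a b (F1_d k u v) (DF1_exd k u v)) as HD.
  pose proof (isR_lin2 _ _ a b _ _ 1 (-1) H HD) as H'.
  replace (2*u * RInt (F1 k u v) a b + (-2*v) * RInt (F2 k u v) a b - (F1 k u v b - F1 k u v a)) with
    (1 * (2*u * RInt (F1 k u v) a b + (-2*v) * RInt (F2 k u v) a b) + (-1) * (F1 k u v b - F1 k u v a)) by ring.
  eapply isR_ext; [|exact H']. intros x. rewrite F1_S. ring.
Qed.

Lemma F2_S_int k u v a b : @eq R (RInt (F2 (S k) u v) a b)
  (2*u * RInt (F2 k u v) a b + 2*v * RInt (F1 k u v) a b - (F2 k u v b - F2 k u v a)).
Proof.
  apply isR_uniq.
  pose proof (isR_lin2 _ _ a b _ _ (2*u) (2*v) (isR_correct _ a b (exRI_d _ a b (F2_exd k u v))) (isR_correct _ a b (exRI_d _ a b (F1_exd k u v)))) as H.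
  pose proof (isR_deriv _ _ a b (F2_d k u v) (DF2_exd k u v)) as HD.
  pose proof (isR_lin2 _ _ a b _ _ 1 (-1) H HD) as H'.
  replace (2*u * RInt (F2 k u v) a b + 2*v * RInt (F1 k u v) a b - (F2 k u v b - F2 k u v a)) with
    (1 * (2*u * RInt (F2 k u v) a b + 2*v * RInt (F1 k u v) a b) + (-1) * (F2 k u v b - F2 k u v a)) by ring.
  eapply isR_ext; [|exact H']. intros x. rewrite F2_S. ring.
Qed.

Lemma L2_ext g1 g2 l : (forall a b, g1 a b = g2 a b) -> L2 g1 l -> L2 g2 l.
Proof. intros E H eps Heps. destruct (H eps Heps) as [M HM]. exists M. intros. rewrite <- E. auto. Qed.

Lemma core k u v :
  L2 (fun a b => RInt (F1 k u v) a b) (sqrt PI * fst (cpow (2*u, 2*v) k)) /\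
  L2 (fun a b => RInt (F2 k u v) a b) (sqrt PI * snd (cpow (2*u, 2*v) k)).
Proof.
  induction k as [|k [IH1 IH2]].
  - destruct (shift_base u v) as [H1 H2]. simpl fst. simpl snd. split.
    + rewrite Rmult_1_r. eapply L2_ext; [|exact H1]. intros a b. apply RInt_ext. intros. unfold F1. rewrite herm0. symmetry. apply Rmult_1_l.
    + rewrite Rmult_0_r. eapply L2_ext; [|exact H2]. intros a b. apply RInt_ext. intros. unfold F2. rewrite herm0. symmetry. apply Rmult_1_l.
  - change (cpow (2*u, 2*v) (S k)) with (Cmult (2*u, 2*v) (cpow (2*u, 2*v) k)).
    destruct (cpow (2*u, 2*v) k) as [p q]. simpl fst in *. simpl snd in *. split.
    + replace (sqrt PI * (2 * u * p - 2 * v * q)) with (2*u * (sqrt PI * p) + (-2*v) * (sqrt PI * q)) by ring.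
      eapply L2_ext; [|apply (L2_comb _ _ _ _ _ _ _ IH1 IH2 (F1_decay k u v))].
      intros a b. symmetry. apply F1_S_int.
    + replace (sqrt PI * (2 * u * q + 2 * v * p)) with (2*u * (sqrt PI * q) + 2*v * (sqrt PI * p)) by ring.
      eapply L2_ext; [|apply (L2_comb _ _ _ _ _ _ _ IH2 IH1 (F2_decay k u v))].
      intros a b. symmetry. apply F2_S_int.
Qed.

Lemma ballR (x y eps : R) : Rabs (y - x) < eps -> @ball R_UniformSpace x eps y.
Proof. intros H. exact H. Qed.

Lemma ballR' (x y eps : R) : @ball R_UniformSpace x eps y -> Rabs (y - x) < eps.
Proof. intros H. exact H. Qed.

Lemma gen_of_L2 (f : R -> C) l1 l2 :
  (forall a b, ex_RInt (fun x => fst (f x)) a b) ->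
  (forall a b, ex_RInt (fun x => snd (f x)) a b) ->
  L2 (fun a b => RInt (fun x => fst (f x)) a b) l1 ->
  L2 (fun a b => RInt (fun x => snd (f x)) a b) l2 ->
  @is_RInt_gen (prod_NormedModule R_AbsRing R_NormedModule R_NormedModule)
    f (Rbar_locally m_infty) (Rbar_locally p_infty) (l1, l2).
Proof.
  intros E1 E2 H1 H2 P [eps HP].
  destruct (H1 eps (cond_pos eps)) as [M1 HM1].
  destruct (H2 eps (cond_pos eps)) as [M2 HM2].
  set (M := Rmax M1 M2).
  pose proof (Rmax_l M1 M2). pose proof (Rmax_r M1 M2).
  apply (Filter_prod _ _ _ (fun a => a < - M) (fun b => M < b)).
  - exists (-M). auto.
  - exists M. auto.
  - intros a b Ha Hb. simpl.
    exists (RInt (fun x => fst (f x)) a b, RInt (fun x => snd (f x)) a b). split.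
    + apply is_RInt_fct_extend_pair; apply isR_correct; auto.
    + apply HP. split; simpl; apply ballR.
      * apply HM1; unfold M in *; lra.
      * apply HM2; unfold M in *; lra.
Qed.

Lemma s2sq : sqrt 2 * sqrt 2 = 2.
Proof. apply sqrt_sqrt. lra. Qed.
Lemma s2pos : 0 < sqrt 2.
Proof. apply sqrt_lt_R0. lra. Qed.
Lemma inv_sqrt2 : / sqrt 2 = sqrt 2 / 2.
Proof. pose proof s2sq. pose proof s2pos. field_simplify_eq; [lra|lra]. Qed.
Lemma s2p2 : sqrt 2 ^ 2 = 2.
Proof. simpl. rewrite Rmult_1_r. apply s2sq. Qed.
Lemma s2p3 : sqrt 2 ^ 3 = 2 * sqrt 2.
Proof. simpl. rewrite Rmult_1_r, <- Rmult_assoc, s2sq. ring. Qed.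
Lemma s2p4 : sqrt 2 ^ 4 = 4.
Proof. replace (sqrt 2 ^ 4) with (sqrt 2 ^ 2 * sqrt 2 ^ 2) by ring. rewrite s2p2. ring. Qed.

Ltac s2ring := rewrite ?inv_sqrt2; unfold Rdiv; ring_simplify; rewrite ?s2p4, ?s2p3, ?s2p2; field.

Goal forall z1 w : R, (z1 * (sqrt 2 / 2)) * 2 * sqrt 2 = 2 * z1 /\ z1 * / sqrt 2 * sqrt 2 = z1.
Proof. intros; split; s2ring. Qed.

Lemma cexp_plus A B : cexp (Cplus A B) = Cmult (cexp A) (cexp B).
Proof.
  destruct A as [a1 a2], B as [b1 b2]. unfold cexp, Cplus, Cmult; simpl.
  rewrite exp_plus, cos_plus, sin_plus. f_equal; ring.
Qed.

Lemma cexp_R r : cexp (RtoC r) = RtoC (exp r).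
Proof. unfold cexp, RtoC; simpl. rewrite cos_0, sin_0. f_equal; ring. Qed.

Definition bb (w : R) : C := Cmult (Copp (Cmult Ci (RtoC (/ sqrt 2)))) (RtoC w).
Definition uu (z : C) := fst z * sqrt 2 / 2.
Definition vv (z : C) (w : R) := (snd z + w * sqrt 2 / 2) * sqrt 2 / 2.
Definition DD (z : C) (w : R) : C := (-(sqrt 2 * w * snd z)/2 - w * w / 4, fst z * w * sqrt 2 / 2).
Definition Nk (k : nat) := / sqrt (2 ^ k * INR (Factorial.fact k) * sqrt PI).
Definition P4 := Rpower PI (- (1/4)).
Definition KK k z w cj : C := Cmult (RtoC (cj * P4 * Nk k)) (cexp (DD z w)).
Definition EE (z : C) (x : R) : C :=
  Cplus (Cmult (RtoC (-1/2)) (Cplus (Cmult z z) (RtoC (x ^ 2)))) (Cmult (RtoC (sqrt 2 * x)) z).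

Lemma pairF k u v x : (F1 k u v x, F2 k u v x) = Cmult (RtoC (hermite k x)) (cexp (ph u v 1 x, th u v 1 x)).
Proof. unfold F1, F2, R1, R2, cexp, Cmult, RtoC; simpl. f_equal; ring. Qed.

Lemma arg_eq z w x :
  Cplus (Cplus (EE z x) (RtoC (- (x^2) / 2))) (Cmult Ci (RtoC (w * x))) =
  Cplus (DD z w) (ph (uu z) (vv z w) 1 x, th (uu z) (vv z w) 1 x).
Proof.
  destruct z as [z1 z2]. unfold EE, DD, ph, th, uu, vv, Cplus, Cmult, RtoC, Ci; simpl.
  f_equal; s2ring.
Qed.

Lemma PW k z w cj x :
  Cmult (RtoC P4) (Cmult (cexp (EE z x)) (Cmult (RtoC (hermite_fn k x))
     (Cmult (RtoC cj) (cexp (Cmult Ci (RtoC (w * x)))))))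
  = Cmult (KK k z w cj) (F1 k (uu z) (vv z w) x, F2 k (uu z) (vv z w) x).
Proof.
  rewrite pairF. unfold KK.
  match goal with |- ?a = ?b => change (@eq C a b) end.
  assert (Hf : hermite_fn k x = Nk k * hermite k x * exp (- (x ^ 2) / 2)) by reflexivity.
  rewrite Hf, (RtoC_mult (Nk k * hermite k x)), (RtoC_mult (Nk k)), (RtoC_mult (cj * P4)), (RtoC_mult cj), <- cexp_R.
  assert (key : Cmult (Cmult (cexp (EE z x)) (cexp (RtoC (- (x^2) / 2)))) (cexp (Cmult Ci (RtoC (w * x))))
              = Cmult (cexp (DD z w)) (cexp (ph (uu z) (vv z w) 1 x, th (uu z) (vv z w) 1 x))).
  { rewrite <- !cexp_plus. f_equal. apply arg_eq. }
  transitivity (Cmult (Cmult (Cmult (Cmult (RtoC P4) (RtoC (Nk k))) (RtoC (hermite k x))) (RtoC cj))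
     (Cmult (Cmult (cexp (EE z x)) (cexp (RtoC (- (x^2) / 2)))) (cexp (Cmult Ci (RtoC (w * x)))))).
  { ring. }
  rewrite key. ring.
Qed.

Lemma sqrt_pow2k k : sqrt (2 ^ k) = sqrt 2 ^ k.
Proof.
  induction k as [|k IH]. { simpl. apply sqrt_1. }
  simpl. rewrite sqrt_mult by (try lra; apply pow_le; lra). rewrite IH. reflexivity.
Qed.

Lemma P4_sqrt : P4 * sqrt PI = sqrt (sqrt PI).
Proof.
  pose proof PI_RGT_0.
  assert (HsP : 0 < sqrt PI) by (apply sqrt_lt_R0; lra).
  unfold P4. rewrite <- (Rpower_sqrt PI H).
  assert (Hp : 0 < Rpower PI (/2)) by apply exp_pos.
  rewrite <- (Rpower_sqrt (Rpower PI (/2)) Hp).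
  rewrite Rpower_mult, <- Rpower_plus. f_equal. field.
Qed.

Lemma const_eq k : P4 * Nk k * sqrt PI * sqrt 2 ^ k = / sqrt (INR (Factorial.fact k)).
Proof.
  pose proof PI_RGT_0.
  assert (HsP : 0 < sqrt PI) by (apply sqrt_lt_R0; lra).
  assert (HssP : 0 < sqrt (sqrt PI)) by (apply sqrt_lt_R0; lra).
  assert (Hf : 0 < sqrt (INR (Factorial.fact k))) by (apply sqrt_lt_R0, INR_fact_lt_0).
  assert (H2 : 0 < sqrt 2 ^ k) by (apply pow_lt, s2pos).
  unfold Nk.
  rewrite sqrt_mult by (first [left; exact HsP | apply Rmult_le_pos; [apply pow_le; lra | left; apply INR_fact_lt_0]]).
  rewrite sqrt_mult by (first [apply pow_le; lra | left; apply INR_fact_lt_0]).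
  rewrite sqrt_pow2k.
  replace (P4 * / (sqrt 2 ^ k * sqrt (INR (Factorial.fact k)) * sqrt (sqrt PI)) * sqrt PI * sqrt 2 ^ k)
    with ((P4 * sqrt PI) * / (sqrt 2 ^ k * sqrt (INR (Factorial.fact k)) * sqrt (sqrt PI)) * sqrt 2 ^ k) by ring.
  rewrite P4_sqrt. field. repeat split; lra.
Qed.

Lemma step1 z w : (2 * uu z, 2 * vv z w) = Cmult (RtoC (sqrt 2)) (Cminus z (bb w)).
Proof.
  destruct z as [z1 z2]. unfold uu, vv, bb, Cminus, Cplus, Copp, Cmult, RtoC, Ci; simpl.
  f_equal; s2ring.
Qed.

Lemma cpow_scal r y k : cpow (Cmult (RtoC r) y) k = Cmult (RtoC (r ^ k)) (cpow y k).
Proof.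
  induction k as [|k IH]; simpl.
  - unfold RtoC, Cmult; simpl. f_equal; ring.
  - rewrite IH, RtoC_mult. ring.
Qed.

Lemma step4 z w : fock_kernel (bb w) z = cexp (DD z w).
Proof.
  unfold fock_kernel. f_equal.
  assert (Hm : Cmod (bb w) ^ 2 = w * w / 2).
  { unfold Cmod. rewrite pow2_sqrt.
    - unfold bb, Cmult, Copp, Ci, RtoC; simpl. s2ring.
    - apply Rplus_le_le_0_compat; apply pow2_ge_0. }
  rewrite Hm. destruct z as [z1 z2].
  unfold bb, DD, Cminus, Cplus, Copp, Cmult, Cconj, RtoC, Ci; simpl. f_equal; s2ring.
Qed.

Lemma VL k z w cj :
  Cmult (KK k z w cj) (sqrt PI * fst (cpow (2 * uu z, 2 * vv z w) k), sqrt PI * snd (cpow (2 * uu z, 2 * vv z w) k))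
  = Cmult (RtoC cj) (Cmult (fock_kernel (bb w) z) (ek k (Cminus z (bb w)))).
Proof.
  rewrite step1, cpow_scal, step4. unfold KK, ek.
  set (Y := cpow (Cminus z (bb w)) k).
  replace (sqrt PI * fst (Cmult (RtoC (sqrt 2 ^ k)) Y), sqrt PI * snd (Cmult (RtoC (sqrt 2 ^ k)) Y))
    with (Cmult (RtoC (sqrt PI * sqrt 2 ^ k)) Y).
  2: { destruct Y as [y1 y2]. unfold Cmult, RtoC; simpl. f_equal; ring. }
  transitivity (Cmult (RtoC (cj * (P4 * Nk k * sqrt PI * sqrt 2 ^ k))) (Cmult (cexp (DD z w)) Y)).
  { rewrite !RtoC_mult. ring. }
  rewrite const_eq, RtoC_mult. ring.
Qed.

Notation PNM := (prod_NormedModule R_AbsRing R_NormedModule R_NormedModule).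

Lemma Decay0 : Decay (fun _ => 0).
Proof. intros eps Heps. exists 0. split; [lra|]. intros. rewrite Rabs_R0. lra. Qed.

Lemma L2_lin g1 g2 l1 l2 al be :
  L2 g1 l1 -> L2 g2 l2 -> L2 (fun a b => al * g1 a b + be * g2 a b) (al * l1 + be * l2).
Proof.
  intros H1 H2. eapply L2_ext; [|apply (L2_comb _ _ _ _ al be _ H1 H2 Decay0)].
  intros a b. simpl. ring.
Qed.

Lemma L2_val g l l' : L2 g l -> l = l' -> L2 g l'.
Proof. intros H E. subst. exact H. Qed.

Lemma gen_K k u v (K : C) :
  @is_RInt_gen PNM (fun x => Cmult K (F1 k u v x, F2 k u v x)) (Rbar_locally m_infty) (Rbar_locally p_infty)
    (Cmult K (sqrt PI * fst (cpow (2*u, 2*v) k), sqrt PI * snd (cpow (2*u, 2*v) k))).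
Proof.
  destruct (core k u v) as [H1 H2].
  destruct K as [k1 k2].
  apply (gen_of_L2 (fun x => Cmult (k1, k2) (F1 k u v x, F2 k u v x))).
  - intros a b. simpl. apply exRI_d. intros x.
    apply (ex_derive_minus (K:=R_AbsRing) (V:=R_NormedModule) (fun x => k1 * F1 k u v x) (fun x => k2 * F2 k u v x));
    apply (ex_derive_scal); [apply F1_exd|apply F2_exd].
  - intros a b. simpl. apply exRI_d. intros x.
    apply (ex_derive_plus (K:=R_AbsRing) (V:=R_NormedModule) (fun x => k1 * F2 k u v x) (fun x => k2 * F1 k u v x));
    apply (ex_derive_scal); [apply F2_exd|apply F1_exd].
  - simpl. eapply L2_val.
    { eapply L2_ext; [|apply (L2_lin _ _ _ _ k1 (-k2) H1 H2)].
      intros a b. symmetry. apply isR_uniq.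
      eapply isR_ext; [|apply isR_lin2; apply isR_correct; apply exRI_d; [apply F1_exd|apply F2_exd]].
      intros x. simpl. ring. }
    ring.
  - simpl. eapply L2_val.
    { eapply L2_ext; [|apply (L2_lin _ _ _ _ k1 k2 H2 H1)].
      intros a b. symmetry. apply isR_uniq.
      eapply isR_ext; [|apply isR_lin2; apply isR_correct; apply exRI_d; [apply F2_exd|apply F1_exd]].
      intros x. simpl. ring. }
    ring.
Qed.

Lemma gen_sum (g : nat -> R -> C) (l : nat -> C) m :
  (forall j, @is_RInt_gen PNM (g j) (Rbar_locally m_infty) (Rbar_locally p_infty) (l j)) ->
  @is_RInt_gen PNM (fun x => @sum_n C_AbelianMonoid (fun j => g j x) m) (Rbar_locally m_infty) (Rbar_locally p_infty) (@sum_n C_AbelianMonoid l m).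
Proof.
  intros H. induction m as [|m IH].
  - rewrite sum_O. eapply is_RInt_gen_ext; [apply filter_forall|apply (H 0%nat)].
    intros ab x _. rewrite sum_O. reflexivity.
  - rewrite sum_Sn.
    eapply is_RInt_gen_ext; [apply filter_forall|
      exact (is_RInt_gen_plus (V:=PNM) (Fa:=Rbar_locally m_infty) (Fb:=Rbar_locally p_infty) _ _ _ _ IH (H (S m)))].
    intros ab x _. rewrite sum_Sn. reflexivity.
Qed.

Lemma Cmult_sum (a : C) (u : nat -> C) n : Cmult a (sum_n u n) = sum_n (fun j => Cmult a (u j)) n.
Proof.
  induction n as [|n IH].
  - rewrite !sum_O. reflexivity.
  - rewrite !sum_Sn, <- IH. unfold plus; simpl. ring.
Qed.

Lemma sum_n_ext' {G : AbelianMonoid} (a b : nat -> G) n : (forall j, a j = b j) -> sum_n a n = sum_n b n.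
Proof. intros H. apply sum_n_ext. exact H. Qed.

Theorem corollary3p20 (a : R) (k n : nat) (z : C) :
  1 < a -> (1 <= n)%nat ->
  is_bargmann (Htest k n a) z
    (sum_n (fun j => Cmult (RtoC (Ccoef n a j))
                     (Cmult (fock_kernel (bj n j) z) (ek k (Cminus z (bj n j))))) n)
  /\
  sum_n (fun j => Cmult (RtoC (Ccoef n a j))
                  (Cmult (fock_kernel (bj n j) z) (ek k (Cminus z (bj n j))))) n
  = sum_n (fun j => Cmult (RtoC (Ccoef n a j)) (weyl (bj n j) (ek k) z)) n.
Proof.
  intros _ _. split.
  - unfold is_bargmann.
    set (g := fun j x => Cmult (KK k z (freq n j) (Ccoef n a j))
                 (F1 k (uu z) (vv z (freq n j)) x, F2 k (uu z) (vv z (freq n j)) x)).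
    assert (HV : sum_n (fun j => Cmult (RtoC (Ccoef n a j))
                     (Cmult (fock_kernel (bj n j) z) (ek k (Cminus z (bj n j))))) n =
                 sum_n (fun j => Cmult (KK k z (freq n j) (Ccoef n a j))
                   (sqrt PI * fst (cpow (2 * uu z, 2 * vv z (freq n j)) k),
                    sqrt PI * snd (cpow (2 * uu z, 2 * vv z (freq n j)) k))) n).
    { apply sum_n_ext'. intros j. rewrite VL. reflexivity. }
    rewrite HV.
    eapply is_RInt_gen_ext; [apply filter_forall| apply (gen_sum g)].
    + intros ab x _. unfold g, bargmann_integrand, Htest.
      rewrite Cmult_sum, Cmult_sum, Cmult_sum.
      match goal with |- ?x = ?y => change (@eq C x y) end.
      apply sum_n_ext'. intros j.
      symmetry. exact (PW k z (freq n j) (Ccoef n a j) x).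
    + intros j. unfold g. apply gen_K.
  - apply sum_n_ext'. intros j. unfold weyl. f_equal. apply Cmult_comm.
Qed.
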